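(* For every nonempty graph $G$, the limit $\hat r_\infty(G)=\lim_{t\to\infty}\frac{\hat r(tK_2,G)}{t\,\hat r(K_2,G)}$ exists and \[\hat r_{\infty}(G)=\inf_{t\ge 1}\frac{\hat r(tK_2,G)}{t|E(G)|}.\] Moreover, $0\le \hat r_\infty(G)\le 1$, and $\hat r_\infty(G)=1$ if and only if $\hat r(tK_2,G)=t|E(G)|$ for every $t\ge 1$. In particular, for every integer $t\ge1$, $\hat r_\infty(G)\le \frac{\hat r(tK_2,G)}{t|E(G)|}$.
   Context: All graphs are finite and simple; a graph is nonempty if it has at least one edge. $tK_2$ denotes a matching with $t$ edges. For graphs $F,G,H$, $F\to(G,H)$ means every red--blue coloring of $E(F)$ contains a red copy of $G$ or a blue copy of $H$, and $\hat r(G,H)=\min\{|E(F)|:F\to(G,H)\}$. *)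

(* Defs.v *)
From HB Require Import structures.
From mathcomp Require Import all_boot all_order all_algebra.
From mathcomp Require Import all_classical all_reals all_analysis.

Set Implicit Arguments.
Unset Strict Implicit.
Unset Printing Implicit Defensive.

Record graph := Graph {
  gn : nat;
  gadj : rel 'I_gn;
  gadj_sym : symmetric gadj;
  gadj_irr : irreflexive gadj }.

Definition nedges (F : graph) : nat :=
  #|[set p : 'I_(gn F) * 'I_(gn F) | (p.1 < p.2)%N && gadj p.1 p.2]|.

(* A red-blue colouring of E(F): colour of edge {x,y} is col (min,max);
   true = red, false = blue.  Every colouring of the edges arises this way. *)
Definition coloring (F : graph) := {ffun 'I_(gn F) * 'I_(gn F) -> bool}.

Definition ecol (F : graph) (col : coloring F) (x y : 'I_(gn F)) : bool :=
  if (x < y)%N then col (x, y) else col (y, x).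

Definition has_mono_copy (F : graph) (col : coloring F) (b : bool) (G : graph) :=
  exists f : 'I_(gn G) -> 'I_(gn F), injective f /\
    forall u v, gadj u v -> gadj (f u) (f v) /\ ecol col (f u) (f v) = b.

Definition arrows (F G H : graph) : Prop :=
  forall col : coloring F, has_mono_copy col true G \/ has_mono_copy col false H.

Definition sr_pred (G H : graph) : pred nat :=
  fun m => `[< exists F : graph, arrows F G H /\ nedges F = m >].

(* size Ramsey number \hat r(G,H) = min {|E(F)| : F -> (G,H)}
   (such F always exist by Ramsey's theorem; the default 0 is never used). *)
Definition size_ramsey (G H : graph) : nat :=
  match pselect (exists m, sr_pred G H m) with
  | left ex => ex_minn ex
  | right _ => 0
  end.

(* t K_2 : the matching with t edges, on vertices 0..2t-1, edges {2i,2i+1}. *)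
Definition match_adj (t : nat) : rel 'I_(t.*2) :=
  fun i j => (i != j) && ((i : nat)./2 == (j : nat)./2).

Arguments match_adj t : clear implicits.

Lemma match_adj_sym (t : nat) : symmetric (match_adj t).
Proof. by move=> i j; rewrite /match_adj eq_sym [X in _ && X]eq_sym. Qed.

Lemma match_adj_irr (t : nat) : irreflexive (match_adj t).
Proof. by move=> i; rewrite /match_adj eqxx. Qed.

Definition matching (t : nat) : graph :=
  @Graph (t.*2) (match_adj t) (@match_adj_sym t) (@match_adj_irr t).

Definition K2 : graph := matching 1.

(* Main.v *)
Require Import Defs.
From mathcomp Require Import all_boot all_order all_algebra.
From mathcomp Require Import all_classical all_reals all_analysis.
From mathcomp Require Import zify ring lra.
Import Order.TTheory GRing.Theory Num.Theory.
Import numFieldNormedType.Exports.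
Set Implicit Arguments. Unset Strict Implicit.
Definition uadj (F1 F2 : graph) : rel 'I_(gn F1 + gn F2) :=
  fun i j => match fintype.split i, fintype.split j with
  | inl a, inl b => gadj a b
  | inr a, inr b => gadj a b
  | _, _ => false end.
Arguments uadj : clear implicits.

Lemma uadj_sym F1 F2 : symmetric (uadj F1 F2).
Proof. move=> i j; rewrite /uadj; case: (fintype.split i) => a; case: (fintype.split j) => b //; exact: gadj_sym. Qed.

Lemma uadj_irr F1 F2 : irreflexive (uadj F1 F2).
Proof. move=> i; rewrite /uadj; case: (fintype.split i) => a; exact: gadj_irr. Qed.

Definition gunion F1 F2 :=
  @Graph (gn F1 + gn F2) (uadj F1 F2) (@uadj_sym F1 F2) (@uadj_irr F1 F2).

Lemma nedges_union F1 F2 : (nedges (gunion F1 F2) <= nedges F1 + nedges F2)%N.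
Proof.
rewrite /nedges.
pose g1 (p : 'I_(gn F1) * 'I_(gn F1)) : 'I_(gn F1 + gn F2) * 'I_(gn F1 + gn F2) :=
  (lshift _ p.1, lshift _ p.2).
pose g2 (p : 'I_(gn F2) * 'I_(gn F2)) : 'I_(gn F1 + gn F2) * 'I_(gn F1 + gn F2) :=
  (rshift _ p.1, rshift _ p.2).
have sub : [set p : 'I_(gn F1 + gn F2) * 'I_(gn F1 + gn F2) | (p.1 < p.2)%N && uadj F1 F2 p.1 p.2]
   \subset g1 @: [set p : 'I_(gn F1) * 'I_(gn F1) | (p.1 < p.2)%N && gadj p.1 p.2]
     :|: g2 @: [set p : 'I_(gn F2) * 'I_(gn F2) | (p.1 < p.2)%N && gadj p.1 p.2].
  apply/fintype.subsetP => -[i j]; rewrite finset.inE /= => /andP [lt adj].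
  have [x ex] : exists x, i = unsplit x by exists (fintype.split i); rewrite splitK.
  have [y ey] : exists y, j = unsplit y by exists (fintype.split j); rewrite splitK.
  subst i j; move: adj; rewrite /uadj !unsplitK.
  case: x lt => a; case: y => b //= lt adj; apply/setUP.
  - by left; apply/imsetP; exists (a, b) => //; rewrite finset.inE /= lt adj.
  - by right; apply/imsetP; exists (a, b) => //; rewrite finset.inE /= adj -(ltn_add2l (gn F1)) lt.
apply: leq_trans (subset_leq_card sub) _.
rewrite cardsU; apply: leq_trans (leq_subr _ _) _.
by apply: leq_add; apply: leq_imset_card.
Qed.

Definition lcol F1 F2 (col : coloring (gunion F1 F2)) : coloring F1 :=
  [ffun p => col (lshift _ p.1, lshift _ p.2)].
Definition rcol F1 F2 (col : coloring (gunion F1 F2)) : coloring F2 :=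
  [ffun p => col (rshift _ p.1, rshift _ p.2)].

Lemma ecol_l F1 F2 (col : coloring (gunion F1 F2)) a b :
  ecol col (lshift (gn F2) a) (lshift _ b) = ecol (lcol col) a b.
Proof. by rewrite /ecol /lcol !ffunE /=. Qed.

Lemma ecol_r F1 F2 (col : coloring (gunion F1 F2)) a b :
  ecol col (rshift (gn F1) a) (rshift _ b) = ecol (rcol col) a b.
Proof. by rewrite /ecol /rcol !ffunE /= ltn_add2l. Qed.

Lemma uadj_l F1 F2 a b : uadj F1 F2 (lshift (gn F2) a) (lshift _ b) = gadj a b.
Proof. by rewrite /uadj -[lshift _ a]/(unsplit (inl _ a)) -[lshift _ b]/(unsplit (inl _ b)) !unsplitK. Qed.

Lemma uadj_r F1 F2 a b : uadj F1 F2 (rshift (gn F1) a) (rshift _ b) = gadj a b.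
Proof. by rewrite /uadj -[rshift _ a]/(unsplit (inr _ a)) -[rshift _ b]/(unsplit (inr _ b)) !unsplitK. Qed.

Lemma arrows_union s t F1 F2 G :
  arrows F1 (matching s) G -> arrows F2 (matching t) G ->
  arrows (gunion F1 F2) (matching (s + t)) G.
Proof.
move=> A1 A2 col.
case: (A1 (lcol col)) => [[f1 [f1i f1h]]|[f [fi fh]]]; last first.
  right; exists (fun u => lshift (gn F2) (f u)); split.
    by move=> u v /lshift_inj /fi.
  by move=> u v /fh [h1 h2]; rewrite /= uadj_l ecol_l.
case: (A2 (rcol col)) => [[f2 [f2i f2h]]|[f [fi fh]]]; last first.
  right; exists (fun u => rshift (gn F1) (f u)); split.
    by move=> u v /rshift_inj /fi.
  by move=> u v /fh [h1 h2]; rewrite /= uadj_r ecol_r.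
left.
pose h (x : 'I_(s.*2) + 'I_(t.*2)) : 'I_(gn F1) + 'I_(gn F2) :=
  match x with inl a => inl (f1 a) | inr b => inr (f2 b) end.
have hinj : injective h.
  by case=> a [] b //= [] => [/f1i|/f2i] ->.
have E : ((s + t).*2 = s.*2 + t.*2)%N by rewrite doubleD.
exists (fun i => unsplit (h (fintype.split (cast_ord E i)))); split.
  by move=> i j /(can_inj unsplitK)/hinj/(can_inj splitK)/cast_ord_inj.
move=> i j.
have [x ->] : exists x, i = cast_ord (esym E) (unsplit x).
  by exists (fintype.split (cast_ord E i)); rewrite splitK cast_ordK.
have [y ->] : exists y, j = cast_ord (esym E) (unsplit y).
  by exists (fintype.split (cast_ord E j)); rewrite splitK cast_ordK.
rewrite !cast_ordKV !unsplitK /= /match_adj -val_eqE /=.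
case: x => a; case: y => b /=.
- move=> hab; have := f1h a b; rewrite /= /match_adj -val_eqE /= => /(_ hab) [h1 h2].
  by rewrite uadj_l ecol_l.
- have := ltn_ord a; move=> ha /andP [_ /eqP hh]; exfalso; lia.
- have := ltn_ord b; move=> hb /andP [_ /eqP hh]; exfalso; lia.
- move=> hab; have := f2h a b; rewrite /= /match_adj -val_eqE /=.
  have e1 : ((s.*2 + a)./2 = s + a./2)%N by lia.
  have e2 : ((s.*2 + b)./2 = s + b./2)%N by lia.
  move: hab; rewrite e1 e2 eqn_add2l eqn_add2l => hab /(_ hab) [h1 h2].
  by rewrite uadj_r ecol_r.
Qed.

Lemma srP H G : (exists F, arrows F H G) ->
  (exists F, arrows F H G /\ nedges F = size_ramsey H G) /\
  (forall F, arrows F H G -> size_ramsey H G <= nedges F).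
Proof.
case=> F0 A0; rewrite /size_ramsey; case: pselect => [ex|nex]; last first.
  by exfalso; apply: nex; exists (nedges F0); rewrite /sr_pred; apply/asboolP; exists F0.
case: ex_minnP => m; rewrite /sr_pred => /asboolP [F [AF eF]] mmin; split; first by exists F.
by move=> F' AF'; apply: mmin; rewrite /sr_pred; apply/asboolP; exists F'.
Qed.

Lemma nedges_sub (G F : graph) (f : 'I_(gn G) -> 'I_(gn F)) : injective f ->
  (forall u v, gadj u v -> gadj (f u) (f v)) -> nedges G <= nedges F.
Proof.
move=> fi fh; rewrite /nedges.
pose g (p : 'I_(gn G) * 'I_(gn G)) :=
  if (f p.1 < f p.2)%N then (f p.1, f p.2) else (f p.2, f p.1).
rewrite -(card_in_imset (f:=g)).
  apply: subset_leq_card; apply/fintype.subsetP => p /imsetP [[a b]].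
  rewrite finset.inE /= => /andP [ab adj] ->.
  rewrite finset.inE /g /=; have fab := fh a b adj.
  case: (ltnP (f a) (f b)) => h /=; first by rewrite h fab.
  have ne : (f a : nat) != f b.
    by rewrite val_eqE; apply/eqP => /fi e; subst; rewrite ltnn in ab.
  by rewrite ltn_neqAle h andbT eq_sym ne gadj_sym.
move=> [a b] [c d]; rewrite !finset.inE /= => /andP [ab _] /andP [cd _]; rewrite /g /=.
case: (ltnP (f a) (f b)) => h1; case: (ltnP (f c) (f d)) => h2 => -[e1 e2].
- by rewrite (fi _ _ e1) (fi _ _ e2).
- move: (fi _ _ e1) (fi _ _ e2) => E1 E2; subst; lia.
- move: (fi _ _ e1) (fi _ _ e2) => E1 E2; subst; lia.
- by rewrite (fi _ _ e1) (fi _ _ e2).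
Qed.

Lemma ecolC F (col : coloring F) x y : ecol col x y = ecol col y x.
Proof. by rewrite /ecol; case: ltngtP => // /val_inj ->. Qed.

Lemma arrows_self G : arrows G K2 G.
Proof.
move=> col.
case: (boolP [exists u, exists v, gadj u v && ecol col u v]).
  move=> /existsP [u /existsP [v /andP [uv cuv]]]; left.
  have unv : u != v by apply/eqP => e; subst; rewrite gadj_irr in uv.
  exists (fun i : 'I_(1.*2) => if (i : nat) == 0%N then u else v); split.
    move=> i j; have := ltn_ord i; have := ltn_ord j.
    case: eqP => hi; case: eqP => hj hj2 hi2 e; apply: val_inj => /=.
    + by rewrite hi hj.
    + by subst; rewrite eqxx in unv.
    + by subst; rewrite eqxx in unv.
    + rewrite /= in hi2 hj2; lia.
  move=> i j; rewrite /= /match_adj -val_eqE /= => /andP [hne _].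
  have := ltn_ord i; have := ltn_ord j; rewrite /= => hj2 hi2.
  case: (eqVneq (i : nat) 0%N) => hi; case: (eqVneq (j : nat) 0%N) => hj.
  + by rewrite hi hj in hne.
  + by split.
  + by split; [rewrite gadj_sym | rewrite ecolC].
  + exfalso; move: hne hi hj hi2 hj2; set x := nat_of_ord i; set y := nat_of_ord j; move=> /eqP h1 /eqP h2 /eqP h3 h4 h5; rewrite /double /= in h4 h5; lia.
move=> /existsPn hn; right; exists id; split => // u v huv; split => //.
by move: (hn u) => /existsPn /(_ v); rewrite huv /= => /negbTE.
Qed.

Lemma sr_K2 G : size_ramsey K2 G = nedges G.
Proof.
have [[F [AF eF]] mn] := @srP K2 G (ex_intro (fun F => arrows F K2 G) G (@arrows_self G)).
apply/eqP; rewrite eqn_leq (mn G (@arrows_self G)) /= -eF.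
case: (AF [ffun=> false]) => [[f [_ fh]]|[f [fi fh]]].
  have := fh (Ordinal (isT : (0 < 1.*2)%N)) (Ordinal (isT : (1 < 1.*2)%N)) isT.
  by rewrite /ecol !ffunE; case: ifP => _ [].

by apply: (nedges_sub fi) => u v /fh [].
Qed.

Lemma arrows_m0 F G : arrows F (matching 0) G.
Proof.
move=> col; left.
have e0 : 'I_(0.*2) -> False by case.
exists (fun i => match e0 i with end); split => [i|i]; case: (e0 i).
Qed.

Lemma ex_arrows G t : exists F, arrows F (matching t) G.
Proof.
elim: t => [|t [F AF]]; first by exists G; apply: arrows_m0.
by exists (gunion F G); rewrite -addn1; apply: arrows_union AF (@arrows_self G).
Qed.

Lemma sr_sub G s t : size_ramsey (matching (s + t)) G <=
  size_ramsey (matching s) G + size_ramsey (matching t) G.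
Proof.
have [[F1 [A1 e1]] _] := srP (ex_arrows G s).
have [[F2 [A2 e2]] _] := srP (ex_arrows G t).
have [_ mn] := srP (ex_arrows G (s + t)).
apply: leq_trans (mn _ (arrows_union A1 A2)) _.
rewrite -e1 -e2; exact: nedges_union.
Qed.

Lemma sr_le G t : size_ramsey (matching t) G <= t * nedges G.
Proof.
elim: t => [|t IH].
  have [_ mn] := srP (ex_arrows G 0).
  apply: leq_trans (mn _ (@arrows_m0 (matching 0) G)) _.
  rewrite /nedges; apply: leq_trans (max_card _) _.
  by rewrite card_prod card_ord.
rewrite -addn1; apply: leq_trans (sr_sub G t 1) _.
by rewrite mulnDl mul1n leq_add // -/K2 sr_K2.
Qed.

Local Open Scope classical_set_scope.
Local Open Scope ring_scope.
Lemma fekete_nat (a : nat -> nat) :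
  (forall s t, a (s + t) <= a s + a t)%N ->
  forall m n, (0 < m)%N -> (a n * m <= n * a m + m * (a 0%N + m * a 1%N))%N.
Proof.
move=> sub.
have Hk : forall k m r, (a (k * m + r) <= k * a m + a r)%N.
  elim=> [|k IH] m r; first by rewrite mul0n add0n.
  rewrite mulSn -addnA; apply: leq_trans (sub _ _) _.
  by have := IH m r; lia.
have Hr : forall r, (a r <= a 0%N + r * a 1%N)%N.
  elim=> [|r IH]; first by lia.
  rewrite -addn1; apply: leq_trans (sub _ _) _; lia.
move=> m n m0.
have E := divn_eq n m.
have H1 := Hk (n %/ m)%N m (n %% m)%N.
rewrite -E in H1.
have H2 := Hr (n %% m)%N.
have H3 : (n %% m < m)%N by rewrite ltn_mod.
have H4 : (n %/ m * m <= n)%N by rewrite leq_trunc_div.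
have H5 : (n %/ m * m * a m <= n * a m)%N by exact: leq_mul H4 (leqnn _).
have H6 : (n %% m * a 1%N * m <= m * m * a 1%N)%N.
  move: H3; generalize (n %% m)%N (a 1%N) => r b Hr'; nia.
have H7 : (a n * m <= (n %/ m * a m + (a 0%N + n %% m * a 1%N)) * m)%N.
  apply: leq_mul (leqnn _); apply: (leq_trans H1); by rewrite leq_add2l.
move: H5 H6 H7; generalize (n %/ m)%N (n %% m)%N (a n) (a m) (a 0%N) (a 1%N).
move=> *; nia.
Qed.

Lemma fekete (R : realType) (a : nat -> nat) (e : nat) :
  (0 < e)%N -> (forall s t, a (s + t) <= a s + a t)%N ->
  (fun t => (a t)%:R / (t * e)%:R : R) @ \oo -->
     inf [set ((a t)%:R / (t * e)%:R : R) | t in [set t : nat | (1 <= t)%N]].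
Proof.
move=> e0 sub.
set q := fun t => _.
set S := [set _ | _ in _].
pose C m := (a 0%N + m * a 1%N)%N.
have q0 t : 0 <= q t by rewrite /q divr_ge0.
have key m n : (0 < m)%N -> (0 < n)%N -> q n <= q m + (C m)%:R / (n * e)%:R.
  move=> m0 n0.
  have h : ((a n * m)%:R <= (n * a m + m * C m)%:R :> R).
    by rewrite ler_nat; exact: fekete_nat.
  rewrite natrD !natrM in h.
  rewrite /q -subr_ge0.
  have -> : (a m)%:R / (m * e)%:R + (C m)%:R / (n * e)%:R - (a n)%:R / (n * e)%:R
    = ((n%:R * (a m)%:R + m%:R * (C m)%:R) - (a n)%:R * m%:R) / (n%:R * m%:R * e%:R) :> R.
    rewrite !natrM; field.
    by rewrite !pnatr_eq0 -!lt0n e0 m0 n0.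
  by rewrite divr_ge0 ?subr_ge0 // !mulr_ge0.
have lbS : lbound S 0 by move=> _ [t _ <-].
have neS : S !=set0 by exists (q 1%N); exists 1%N.
have hinf : has_inf S by split => //; exists 0.
apply/cvgrPdist_lt => eps eps0.
have eps20 : 0 < eps / 2 by rewrite divr_gt0.
have [_ [m m1 <-] Hm] := inf_adherent eps20 hinf.
set B := (C m)%:R / (e%:R * (eps / 2)) : R.
have B0 : 0 <= B by rewrite divr_ge0 // mulr_ge0 // ltW.
exists (Num.bound B).+1 => // n /= Hn.
have n0 : (0 < n)%N by apply: leq_trans Hn.
have Bn : B < n%:R.
  apply: lt_le_trans (archi_boundP B0) _.
  by rewrite ler_nat; apply: leq_trans Hn.
have Cn : (C m)%:R / (n * e)%:R < eps / 2.
  rewrite ltr_pdivrMr ?ltr0n ?muln_gt0 ?n0 ?e0 //.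
  move: Bn; rewrite /B ltr_pdivrMr ?mulr_gt0 ?ltr0n //.
  rewrite natrM => h; have -> : eps / 2 * (n%:R * e%:R) = n%:R * (e%:R * (eps / 2)) by ring.
  exact: h.
have Lq : inf S <= q n by apply: ge_inf; [exists 0 | exists n].
have := key m n m1 n0.
rewrite ltr_distlC => h; rewrite /q in h Lq *.
move: Hm h Cn Lq; set x := (a m)%:R / _; set y := (a n)%:R / _; set z := (C m)%:R / _.
move=> *; apply/andP; split; lra.
Qed.

Unset Implicit Arguments.
Set Strict Implicit.

Theorem corollary2p4 (R : realType) (G : graph) :
  (0 < nedges G)%N ->
  let u : nat -> R := fun t =>
    (size_ramsey (matching t) G)%:R / (t%:R * (size_ramsey K2 G)%:R) in
  let q : nat -> R := fun t =>
    (size_ramsey (matching t) G)%:R / (t * nedges G)%:R in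
  let rinf : R := lim (u @ \oo) in
  [/\ cvg (u @ \oo),
      rinf = inf [set q t | t in [set t : nat | (1 <= t)%N]],
      0 <= rinf /\ rinf <= 1,
      rinf = 1 <-> (forall t : nat, (1 <= t)%N ->
                      size_ramsey (matching t) G = (t * nedges G)%N)
    & forall t : nat, (1 <= t)%N -> rinf <= q t].
Proof.
move=> e0 u q rinf.
have uq : u = q by apply/funext => t; rewrite /u /q sr_K2 natrM.
have conv : q @ \oo --> inf [set q t | t in [set t : nat | (1 <= t)%N]]
  := @fekete R (fun t => size_ramsey (matching t) G) (nedges G) e0 (sr_sub G).
set S := [set q t | t in _] in conv *.
have rinfE : rinf = inf S by rewrite /rinf uq; exact: cvg_lim conv.
have q0 t : 0 <= q t by rewrite /q divr_ge0.
have q1 : q 1%N = 1.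
  by rewrite /q sr_K2 mul1n divff // pnatr_eq0 -lt0n.
have lbS : has_lbound S by exists 0 => _ [t _ <-].
have Sq t : (1 <= t)%N -> rinf <= q t.
  by move=> t1; rewrite rinfE; apply: ge_inf => //; exists t.
have neS : S !=set0 by exists (q 1%N); exists 1%N.
have r1 : rinf <= 1 by rewrite -q1; apply: Sq.
split => //.
- by rewrite uq; exact: cvgP conv.
- by split => //; rewrite rinfE; apply: lb_le_inf => // _ [t _ <-].
split.
- move=> h t t1; apply/eqP; rewrite eqn_leq sr_le /=.
  have := Sq t t1; rewrite h /q ler_pdivlMr ?mul1r ?ltr0n ?muln_gt0 ?t1 ?e0 //.
  by rewrite ler_nat.
- move=> h; apply/eqP; rewrite eq_le r1 /= rinfE; apply: lb_le_inf => // _ [t t1 <-].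
  by rewrite /q h // divff // pnatr_eq0 -lt0n muln_gt0 t1 e0.
Qed.
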